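(* There exist finite simple undirected graphs $G_1$, $G_2$ and an integer $\alpha \ge 1$ such that 1-WL does not distinguish $G_1$ and $G_2$ (for every $i \ge 0$ the multisets of 1-WL colours $\{\!\{ c^i_v : v \in V_1\}\!\}$ and $\{\!\{ c^i_v : v \in V_2\}\!\}$ coincide), but $G_1$ and $G_2$ are not $\textsc{Igel}$-equivalent for $\alpha$.
   Context: Graphs $G=(V,E)$ are finite, simple and undirected; $d_G(v)$ is the degree of $v$ in $G$, $l_G(u,v)$ the shortest-path distance, $\{\!\{\cdot\}\!\}$ denotes a multiset, and $\mathcal{N}^\alpha_G(v) = \{u \in V : l_G(u,v) \le \alpha\}$. The $\alpha$-depth ego-network $\mathcal{E}^\alpha_v$ of $v$ is the subgraph of $G$ induced by $\mathcal{N}^\alpha_G(v)$. 1-WL (colour refinement): fix an injective map $\mathrm{hash}$ from finite multisets to colours, used simultaneously for both graphs. Initially $c^0_v = \mathrm{hash}(\{\!\{ d_G(v)\}\!\})$, and for $i \ge 0$, $c^{i+1}_v = \mathrm{hash}(\{\!\{ c^i_u : u \in \mathcal{N}^1_G(v),\ u \ne v\}\!\})$. $\textsc{Igel}$ encoding with parameter $\alpha \ge 1$: $e^0_v = \{\!\{(0, d_G(v))\}\!\}$, and for $i = 1,\dots,\alpha$, $e^i_v = e^{i-1}_v \cup \{\!\{ (i, d_{\mathcal{E}^\alpha_v}(u)) : u \in \mathcal{N}^\alpha_G(v),\ l_G(u,v) = i\}\!\}$ (multiset union), where $d_{\mathcal{E}^\alpha_v}(u)$ is the degree of $u$ inside $\mathcal{E}^\alpha_v$.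 Two graphs $G_1=(V_1,E_1)$, $G_2=(V_2,E_2)$ are $\textsc{Igel}$-equivalent for $\alpha$ if $\{\!\{ e^\alpha_{v} : v \in V_1\}\!\} = \{\!\{ e^\alpha_{v} : v \in V_2\}\!\}$. *)

(* Defs.v *)
From mathcomp Require Import all_boot.
From mathcomp Require Import finmap multiset.
Set Implicit Arguments. Unset Strict Implicit. Unset Printing Implicit Defensive.
Local Open Scope mset_scope.
Local Open Scope nat_scope.

Definition simple_graph (V : finType) (e : rel V) : Prop :=
  symmetric e /\ irreflexive e.

Definition deg (V : finType) (e : rel V) (v : V) : nat := #|[set u | e v u]|.

Definition mset_img (V : finType) (K : choiceType) (f : V -> K) (A : {set V})
  : {mset K} := seq_mset [seq f x | x <- enum A].

Fixpoint wl_colour (V : finType) (e : rel V) (hash : {mset nat} -> nat)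
    (i : nat) (v : V) : nat :=
  match i with
  | 0 => hash (seq_mset [:: deg e v])
  | i'.+1 => hash (mset_img (wl_colour e hash i') [set u | e v u])
  end.

Definition wl_hist (V : finType) (e : rel V) (hash : {mset nat} -> nat) (i : nat)
  : {mset nat} := mset_img (wl_colour e hash i) [set: V].

Fixpoint ball (V : finType) (e : rel V) (k : nat) (v : V) : {set V} :=
  match k with
  | 0 => [set v]
  | k'.+1 => ball e k' v :|: [set u | [exists w in ball e k' v, e w u]]
  end.

Definition dist_eq (V : finType) (e : rel V) (i : nat) (u v : V) : bool :=
  if i is i'.+1 then (u \in ball e i v) && (u \notin ball e i' v) else u == v.

(* degree of u inside the ego-network E^alpha_v (induced subgraph on ball alpha v) *)
Definition ego_deg (V : finType) (e : rel V) (alpha : nat) (v u : V) : nat :=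
  #|[set w in ball e alpha v | e u w]|.

Fixpoint igel (V : finType) (e : rel V) (alpha : nat) (i : nat) (v : V)
  : {mset (nat * nat)} :=
  match i with
  | 0 => seq_mset [:: (0, deg e v)]
  | i'.+1 => (igel e alpha i' v `+`
              mset_img (fun u => (i, ego_deg e alpha v u))
                [set u in ball e alpha v | dist_eq e i u v])%mset
  end.

Definition igel_hist (V : finType) (e : rel V) (alpha : nat) :
  {mset {mset (nat * nat)}} :=
  mset_img (igel e alpha alpha) [set: V].

Definition igel_equiv (V1 V2 : finType) (e1 : rel V1) (e2 : rel V2) (alpha : nat)
  : Prop := igel_hist e1 alpha = igel_hist e2 alpha.

Definition wl_indist (V1 V2 : finType) (e1 : rel V1) (e2 : rel V2) : Prop :=
  forall hash : {mset nat} -> nat, injective hash ->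
    forall i, wl_hist e1 hash i = wl_hist e2 hash i.

(* Main.v *)
Require Import Defs.
From mathcomp Require Import all_boot.
From mathcomp Require Import finmap multiset.
Open Scope mset_scope.
Set Implicit Arguments.

Definition e1 : rel 'I_6 := fun i j => (j == (i.+1 %% 6) :> nat) || (i == (j.+1 %% 6) :> nat).
Definition e2 : rel 'I_6 := fun i j => (i %/ 3 == j %/ 3) && (i != j).

Lemma in_seq_mset (K : choiceType) (s : seq K) x : (x \in seq_mset s) = (x \in s).
Proof. by rewrite in_mset mset_seqE -has_count has_pred1. Qed.

Fixpoint cst (hash : {mset nat} -> nat) (d i : nat) : nat :=
  match i with 0 => hash (seq_mset [:: d]) | i'.+1 => hash (seq_mset (nseq d (cst hash d i'))) end.

Lemma map_cst (T : Type) (c : nat) (s : seq T) : [seq c | _ <- s] = nseq (size s) c.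
Proof. by elim: s => //= x s ->. Qed.

Lemma wl_reg (V : finType) (e : rel V) d hash :
  (forall v, deg e v = d) -> forall i v, wl_colour e hash i v = cst hash d i.
Proof.
move=> Hd; elim=> [|i IH] v /=; first by rewrite Hd.
rewrite /mset_img (eq_map (fun u => IH u)) map_cst -cardE.
by have := Hd v; rewrite /deg => ->.
Qed.

Lemma wl_hist_reg (V : finType) (e : rel V) d hash i :
  (forall v, deg e v = d) -> wl_hist e hash i = seq_mset (nseq #|V| (cst hash d i)).
Proof.
move=> Hd; rewrite /wl_hist /mset_img (eq_map (fun u => wl_reg hash Hd i u)).
by rewrite map_cst -cardE cardsT.
Qed.

Definition o (k : nat) (H : k < 6) : 'I_6 := Ordinal H.
Definition L6 : seq 'I_6 := [:: @o 0 isT; @o 1 isT; @o 2 isT; @o 3 isT; @o 4 isT; @o 5 isT].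
Lemma enum6 : enum 'I_6 = L6.
Proof. by apply: (inj_map val_inj); rewrite val_enum_ord. Qed.
Lemma card6 (A : {set 'I_6}) : #|A| = count (mem A) L6.
Proof. by rewrite cardE /enum_mem -enumT enum6 size_filter. Qed.

Lemma ball1 (V : finType) (e : rel V) v u : (u \in ball e 1 v) = (u == v) || e v u.
Proof.
rewrite /= !inE; congr (_ || _); apply/existsP/idP => [[w /andP [] ]|H].
  by rewrite inE => /eqP ->.
by exists v; rewrite inE eqxx.
Qed.

Lemma dist1 (V : finType) (e : rel V) v u : dist_eq e 1 u v = (e v u && (u != v)).
Proof. by rewrite /dist_eq ball1 /= inE; case: eqP => //=; rewrite andbF. Qed.

Lemma ego1 (V : finType) (e : rel V) v u : ego_deg e 1 v u = #|[set w | ((w == v) || e v w) && e u w]|.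
Proof. by rewrite /ego_deg; apply: eq_card => w; rewrite [in LHS]inE ball1 inE. Qed.

Ltac cs := case=> [[|[|[|[|[|[|//]]]]]] ?].
Ltac fin := rewrite /deg ?dist1 ?ego1 card6 /=; apply/eqP; rewrite /= ?inE /=.

Lemma deg1 v : deg e1 v = 2. Proof. move: v; cs; rewrite /deg card6 /= !inE /=; by []. Qed.
Lemma deg2 v : deg e2 v = 2. Proof. move: v; cs; rewrite /deg card6 /= !inE /=; by []. Qed.
Lemma c1 v : exists u, (u \in [set u in ball e1 1 v | dist_eq e1 1 u v]) && (ego_deg e1 1 v u == 1).
Proof.
move: v; cs.
- by exists (@o 1 isT); rewrite inE ball1 dist1 ego1 card6 /= !inE.
- by exists (@o 2 isT); rewrite inE ball1 dist1 ego1 card6 /= !inE.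
- by exists (@o 3 isT); rewrite inE ball1 dist1 ego1 card6 /= !inE.
- by exists (@o 4 isT); rewrite inE ball1 dist1 ego1 card6 /= !inE.
- by exists (@o 5 isT); rewrite inE ball1 dist1 ego1 card6 /= !inE.
- by exists (@o 0 isT); rewrite inE ball1 dist1 ego1 card6 /= !inE.
Qed.
Lemma c2 v u : (u \in [set u in ball e2 1 v | dist_eq e2 1 u v]) -> (ego_deg e2 1 v u != 1).
Proof.
rewrite inE ball1 dist1 ego1 card6 => /andP [_ /andP [H1 H2]].
move: v u H1 H2; cs; cs; rewrite /= ?inE //.
Qed.

Theorem lemma2 :
  exists (V1 V2 : finType) (e1 : rel V1) (e2 : rel V2) (alpha : nat),
    [/\ simple_graph e1, simple_graph e2, 1 <= alpha,
        wl_indist e1 e2 & ~ igel_equiv e1 e2 alpha].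
Proof.
exists 'I_6, 'I_6, e1, e2, 1; split => //.
- by split; [move=> x y; rewrite /e1 orbC | move=> x; apply/negP; case: x => [[|[|[|[|[|[|]]]]]]]].
- by split; [move=> x y; rewrite /e2 eq_sym [y == x]eq_sym | move=> x; rewrite /e2 !eqxx].
- move=> hash _ i.
  rewrite (wl_hist_reg (d := 2) hash i); last exact: deg1.
  by rewrite (wl_hist_reg (d := 2) hash i) //; exact: deg2.
- rewrite /igel_equiv /igel_hist => H.
  have : igel e1 1 1 ord0 \in mset_img (igel e1 1 1) [set: 'I_6].
    by rewrite /mset_img in_seq_mset; apply/mapP; exists ord0; rewrite ?mem_enum ?inE.
  rewrite H /mset_img in_seq_mset => /mapP [v _ Hv].
  have : (1, 1) \in igel e1 1 1 ord0.
    rewrite /= in_msetD /mset_img !in_seq_mset; apply/orP; right.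
    move: (c1 ord0) => [u /andP [Hu /eqP Hd]].
    by apply/mapP; exists u; [rewrite mem_enum; exact: Hu | rewrite Hd].
  rewrite Hv /= in_msetD !in_seq_mset => /orP [//|/mapP [u]].
  rewrite mem_enum => Hu [Hd].
  move: (@c2 v u Hu).
  by rewrite -Hd.
Qed.
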